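(* Let $n \geq 3$ and let $\Omega = \bigcap_{m=0}^q \{u_m \leq 0\} \subset \mathbb{R}^n$ be a compact convex polytope with non-empty interior satisfying the standing assumptions described in the context. Let $\Lambda > 1$ be a constant such that for every $x \in \Omega$ and all nonnegative reals $a_0,\dots,a_q$ with $a_i = 0$ whenever $u_i(x) \leq -2\Lambda^{-1}$, one has $\sum_{i=0}^q a_i \leq \Lambda |\sum_{i=0}^q a_i N_i|$. Then there exists a constant $\Xi \in (2\Lambda,\infty)$ with the following property: whenever $1 \leq k \leq q$, $x \in \Omega$ satisfies $-2\Xi^{-1} \leq u_k(x) \leq 0$, and $a_0,\dots,a_{k-1}$ are nonnegative real numbers such that $a_i = 0$ for all $0 \leq i \leq k-1$ with $u_i(x) \leq -2\Xi^{-1}$, we have \[\sum_{i=0}^{k-1} a_i \leq \Xi \, \Big| \Big( \sum_{i=0}^{k-1} a_i N_i \Big) \wedge N_k \Big|.\]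
   Context: Here $u_0,\dots,u_q$ are non-constant linear (affine) functions on $\mathbb{R}^n$ and $\Omega = \bigcap_{m=0}^q\{u_m\le 0\}$ is compact, convex, with non-empty interior. Standing assumptions: (a) for each $k$, the set $\{u_k>0\}\cap\bigcap_{m\neq k}\{u_m\le 0\}$ is non-empty; (b) the Euclidean gradient of each $u_k$ is a unit vector $N_k\in S^{n-1}$; (c) for $0\le j<k\le q$, if there exists $x\in\Omega$ with $u_j(x)=u_k(x)=0$, then $\langle N_j,N_k\rangle\le 0$. For vectors $v,w\in\mathbb{R}^n$, $|v\wedge w|$ denotes the Euclidean norm of the bivector, i.e. $|v\wedge w|^2=|v|^2|w|^2-\langle v,w\rangle^2$. *)

(* Defs.v *)
From HB Require Import structures.
From mathcomp Require Import all_boot all_order all_algebra.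
From mathcomp Require Import all_classical all_reals all_analysis.
Set Implicit Arguments. Unset Strict Implicit. Unset Printing Implicit Defensive.
Import Order.TTheory GRing.Theory Num.Theory.
Import numFieldNormedType.Exports.
Local Open Scope ring_scope.
Local Open Scope classical_set_scope.

Definition dotp (R : realType) (n : nat) (v w : 'rV[R]_n) : R :=
  \sum_(i < n) v ord0 i * w ord0 i.

Definition enorm (R : realType) (n : nat) (v : 'rV[R]_n) : R :=
  Num.sqrt (dotp v v).

(* Euclidean norm of the bivector v /\ w: |v^w|^2 = |v|^2|w|^2 - <v,w>^2. *)
Definition wedge_norm (R : realType) (n : nat) (v w : 'rV[R]_n) : R :=
  Num.sqrt (dotp v v * dotp w w - (dotp v w) ^+ 2).

(* The affine function u_m(x) = <N_m, x> + c_m ; its Euclidean gradient is N_m. *)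
Definition aff (R : realType) (n : nat) (N : 'rV[R]_n) (c : R) (x : 'rV[R]_n) : R :=
  dotp N x + c.

Definition Omega (R : realType) (n q : nat) (N : 'I_q.+1 -> 'rV[R]_n)
  (c : 'I_q.+1 -> R) : set 'rV[R]_n :=
  [set x | forall m, aff (N m) (c m) x <= 0].

(* Main.v *)
Require Import Defs.
From HB Require Import structures.
From mathcomp Require Import all_boot all_order all_algebra.
From mathcomp Require Import all_classical all_reals all_analysis.
From mathcomp Require Import lra ring.
Import Order.TTheory GRing.Theory Num.Theory.
Import numFieldNormedType.Exports.
Local Open Scope ring_scope.
Local Open Scope classical_set_scope.
Section S.
Variables (R : realType) (n : nat).
Implicit Types u v w : 'rV[R]_n.
Lemma dotpDl u v w : dotp (u + v) w = dotp u w + dotp v w.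
Proof. by rewrite /dotp -big_split; apply: eq_bigr => i _; rewrite mxE mulrDl. Qed.
Lemma dotpZl a u w : dotp (a *: u) w = a * dotp u w.
Proof. by rewrite /dotp mulr_sumr; apply: eq_bigr => i _; rewrite mxE mulrA. Qed.
Lemma dotpC u w : dotp u w = dotp w u.
Proof. by rewrite /dotp; apply: eq_bigr => i _; rewrite mulrC. Qed.
Lemma dotp0l w : dotp 0 w = 0.
Proof. by rewrite /dotp big1 // => i _; rewrite mxE mul0r. Qed.
Lemma dotp_suml (I : finType) (P : pred I) (f : I -> 'rV[R]_n) w :
  dotp (\sum_(i | P i) f i) w = \sum_(i | P i) dotp (f i) w.
Proof.
apply: (big_morph (fun u => dotp u w)); [exact: (fun x y => dotpDl x y w)|exact: dotp0l].
Qed.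
Lemma dotp_ge0 u : 0 <= dotp u u.
Proof. by apply: sumr_ge0 => i _; rewrite -expr2 sqr_ge0. Qed.
Lemma dotp1 u : enorm u = 1 -> dotp u u = 1.
Proof. by rewrite /enorm => h; rewrite -(sqr_sqrtr (dotp_ge0 u)) h expr1n. Qed.

Lemma aff_near (N : 'rV[R]_n) (c : R) (p : 'rV[R]_n) (d : R) : 0 < d ->
  nbhs p [set y | `|aff N c y - aff N c p| < d].
Proof.
move=> d0; set S := \sum_i `|N ord0 i|.
have S0 : 0 <= S by apply: sumr_ge0 => i _.
have e0 : 0 < d / (1 + S) by rewrite divr_gt0 // ltr_wpDr.
apply/nbhs_ballP; exists (d / (1 + S)) => //= y [_ py].
have E : aff N c y - aff N c p = \sum_i N ord0 i * (y ord0 i - p ord0 i).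
  by rewrite /aff /dotp opprD addrACA subrr addr0 -sumrB; apply: eq_bigr => i _; rewrite mulrBr.
rewrite /= E.
apply: (le_lt_trans (ler_norm_sum _ _ _)).
apply: (@le_lt_trans _ _ (\sum_i `|N ord0 i| * (d / (1 + S)))).
  apply: ler_sum => i _; rewrite normrM ler_wpM2l //.
  by have := py ord0 i; rewrite /ball /= distrC => /ltW.
rewrite -mulr_suml -/S.
have h1 : (1 + S) * (d / (1 + S)) = d by rewrite mulrC divfK // gt_eqF // ltr_wpDr.
by rewrite -[X in _ < X]h1 ltr_pM2r // ltrDr.
Qed.

Lemma faces_meet q (N : 'I_q.+1 -> 'rV[R]_n) (c : 'I_q.+1 -> R) (j k : 'I_q.+1) :
  compact (Omega N c) ->
  (forall e : R, 0 < e -> exists x, Omega N c x /\ (- e) <= aff (N j) (c j) x /\ (- e) <= aff (N k) (c k) x) ->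
  exists2 x, Omega N c x & aff (N j) (c j) x = 0 /\ aff (N k) (c k) x = 0.
Proof.
move=> Ocpt H.
pose S (e : R) := [set x | Omega N c x /\ (- e) <= aff (N j) (c j) x /\ (- e) <= aff (N k) (c k) x].
pose F := filter_from [set e : R | 0 < e] S.
have FF : Filter F.
  apply: filter_from_filter; first by exists 1; rewrite /= ltr01.
  move=> a b /= a0 b0; exists (Num.min a b) => /=; first by rewrite lt_min a0 b0.
  move=> x [Ox [h1 h2]]; have ha : Num.min a b <= a by rewrite ge_min lexx.
  have hb : Num.min a b <= b by rewrite ge_min lexx orbT.
  split; split => //; split; apply: le_trans _ (_ : - Num.min a b <= _) => //;
    by rewrite lerN2.
have PF : ProperFilter F.
  apply: filter_from_proper => // e /= e0; have [x hx] := H e e0; by exists x.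
have [|p [Op clp]] := Ocpt F PF; first by exists 1 => //= x [].
have key : forall m, (m = j \/ m = k) -> 0 <= aff (N m) (c m) p.
  move=> m hm; rewrite leNgt; apply/negP => hlt.
  pose d := - aff (N m) (c m) p / 2.
  have d0 : 0 < d by rewrite divr_gt0 // oppr_gt0.
  have FSd : F (S d) by exists d.
  have [y [[Oy [hyj hyk]] hy]] := clp _ _ FSd (aff_near (N m) (c m) p d d0).
  move: hy; rewrite /= ltr_distl => /andP[_ hy2].
  have hy3 : - d <= aff (N m) (c m) y by case: hm => ->.
  have : aff (N m) (c m) p = - (d * 2) by rewrite /d divfK // opprK.
  move=> hp; rewrite hp in hy2; have := le_lt_trans hy3 hy2; move: d0; clearbody d; clear; move=> d0; lra.
exists p => //; split; apply/eqP; rewrite eq_le Op /=; apply: key; by [left|right].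
Qed.

Lemma dotpDr u v w : dotp u (v + w) = dotp u v + dotp u w.
Proof. by rewrite dotpC dotpDl !(dotpC u). Qed.
Lemma dotpZr a u w : dotp u (a *: w) = a * dotp u w.
Proof. by rewrite dotpC dotpZl dotpC. Qed.

Lemma fin_eps (T : finType) (P : T -> R -> Prop) :
  (forall t, exists2 e, 0 < e & P t e) ->
  (forall t e e', 0 < e' -> e' <= e -> P t e -> P t e') ->
  exists2 e, 0 < e & forall t, P t e.
Proof.
move=> H mono.
suff: forall s : seq T, exists2 e, 0 < e & forall t, t \in s -> P t e.
  move=> /(_ (enum T)) [e e0 he]; exists e => // t; apply: he; by rewrite mem_enum.
elim=> [|a s [e e0 he]]; first by exists 1.
have [ea ea0 hea] := H a.
exists (Num.min e ea); first by rewrite lt_min e0 ea0.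
move=> t; rewrite inE => /orP[/eqP ->|ts].
  by apply: mono hea; rewrite ?lt_min ?e0 ?ea0 // ge_min lexx orbT.
by apply: mono (he t ts); rewrite ?lt_min ?e0 ?ea0 // ge_min lexx.
Qed.
End S.

Lemma sum_split (V : zmodType) q (g : 'I_q.+1 -> V) (k : 'I_q.+1) (h : V) :
  \sum_(i : 'I_q.+1) (if (i < k)%N then g i else if i == k then h else 0)
  = \sum_(i < q.+1 | (i < k)%N) g i + h.
Proof.
rewrite (bigID (fun i : 'I_q.+1 => (i < k)%N)) /=; congr (_ + _).
  by apply: eq_bigr => i ->.
rewrite (bigD1 k) ?ltnn //= eqxx big1 ?addr0 // => i /andP[/negbTE -> /negbTE ->].
by [].
Qed.

Theorem lemma2p4 (R : realType) (n q : nat)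
  (N : 'I_q.+1 -> 'rV[R]_n) (c : 'I_q.+1 -> R) (Lambda : R) :
  (3 <= n)%N ->
  (* Omega compact, convex, with non-empty interior *)
  compact (Omega N c) ->
  convex_set (Omega N c : set (convex_lmodType 'rV[R]_n)) ->
  (interior (Omega N c) !=set0) ->
  (* standing assumption (a) *)
  (forall k : 'I_q.+1, exists x : 'rV[R]_n,
      0 < aff (N k) (c k) x /\ forall m, m != k -> aff (N m) (c m) x <= 0) ->
  (* standing assumption (b): gradients are unit vectors *)
  (forall k, enorm (N k) = 1) ->
  (* standing assumption (c) *)
  (forall j k : 'I_q.+1, (j < k)%N ->
      (exists2 x, Omega N c x & aff (N j) (c j) x = 0 /\ aff (N k) (c k) x = 0) ->
      dotp (N j) (N k) <= 0) ->
  1 < Lambda ->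
  (forall x, Omega N c x -> forall a : 'I_q.+1 -> R,
      (forall i, 0 <= a i) ->
      (forall i, aff (N i) (c i) x <= - (2 / Lambda) -> a i = 0) ->
      \sum_i a i <= Lambda * enorm (\sum_i a i *: N i)) ->
  exists Xi : R, 2 * Lambda < Xi /\
    forall (k : 'I_q.+1), (1 <= k)%N ->
    forall x, Omega N c x ->
      - (2 / Xi) <= aff (N k) (c k) x -> aff (N k) (c k) x <= 0 ->
    forall a : 'I_q.+1 -> R,
      (forall i : 'I_q.+1, (i < k)%N -> 0 <= a i) ->
      (forall i : 'I_q.+1, (i < k)%N -> aff (N i) (c i) x <= - (2 / Xi) -> a i = 0) ->
      \sum_(i < q.+1 | (i < k)%N) a i
        <= Xi * wedge_norm (\sum_(i < q.+1 | (i < k)%N) a i *: N i) (N k).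
Proof.
move=> n3 Ocpt _ _ _ Nunit Hc L1 HL.
pose P (t : 'I_q.+1 * 'I_q.+1) (e : R) := forall x, Omega N c x ->
  (- e) <= aff (N t.1) (c t.1) x -> (- e) <= aff (N t.2) (c t.2) x ->
  (t.1 < t.2)%N -> dotp (N t.1) (N t.2) <= 0.
have [e0 e00 He] : exists2 e, 0 < e & forall t, P t e.
  apply: fin_eps.
    move=> [j k].
    case: (pselect (forall e : R, 0 < e -> exists x, Omega N c x /\
      (- e) <= aff (N j) (c j) x /\ (- e) <= aff (N k) (c k) x)) => [h|h].
      exists 1 => // x _ _ _ /= jk; apply: Hc jk _; exact: faces_meet Ocpt h.
    move/existsNP: h => [e /not_implyP [e0 hne]].
    exists e => // x Ox h1 h2 _; exfalso; apply: hne; exists x; split => //.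
  move=> t e e' e'0 le P1 x Ox h1 h2; apply: P1 => //.
    by apply: le_trans h1; rewrite lerN2.
  by apply: le_trans h2; rewrite lerN2.
pose Xi := 2 * Lambda + 1 + 2 / e0.
have e2 : 0 < 2 / e0 by rewrite divr_gt0.
have hLX : Lambda < Xi by rewrite /Xi; lra.
have X0 : 0 < Xi by rewrite /Xi; lra.
have L0 : 0 < Lambda by lra.
have hXe : 2 / Xi <= e0.
  rewrite ler_pdivrMr // /Xi mulrDr.
  have -> : e0 * (2 / e0) = 2 by rewrite mulrC divfK // gt_eqF.
  have : 0 <= e0 * (2 * Lambda + 1) by apply: mulr_ge0; lra.
  lra.
have hLX2 : 2 / Xi < 2 / Lambda.
  by rewrite ltr_pM2l // ltf_pV2 ?posrE.
exists Xi; split; first by rewrite /Xi; lra.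
move=> k k1 x Ox hk1 hk2 a ha0 haz.
set v := \sum_(i < q.+1 | (i < k)%N) a i *: N i.
have dv : dotp v (N k) <= 0.
  rewrite /v dotp_suml; apply: sumr_le0 => i ik; rewrite dotpZl.
  have [->|anz] := eqVneq (a i) 0; first by rewrite mul0r.
  apply: mulr_ge0_le0; first exact: ha0.
  have hi : - e0 <= aff (N i) (c i) x.
    have : ~ (aff (N i) (c i) x <= - (2 / Xi)).
      by move=> h; move: anz; rewrite haz // eqxx.
    move/negP; rewrite -ltNge => h; apply: le_trans (ltW h); by rewrite lerN2.
  have hk : - e0 <= aff (N k) (c k) x by apply: le_trans hk1; rewrite lerN2.
  exact: (He (i, k) x Ox hi hk ik).
pose s := - dotp v (N k).
have s0 : 0 <= s by rewrite /s oppr_ge0.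
pose b := fun i : 'I_q.+1 => if (i < k)%N then a i else if i == k then s else 0.
have := HL x Ox b.
have hb0 : forall i, 0 <= b i.
  move=> i; rewrite /b; case: ifP => ik; first exact: ha0.
  by case: ifP.
have hbz : forall i, aff (N i) (c i) x <= - (2 / Lambda) -> b i = 0.
  move=> i hi; rewrite /b; case: ifP => ik.
    apply: haz => //; apply: le_trans hi _; rewrite lerN2; exact: ltW.
  case: ifP => [/eqP eik|//].
  exfalso; rewrite eik in hi; have := le_trans hk1 hi.
  by rewrite lerN2 leNgt hLX2.
move=> /(_ hb0 hbz).
have hsum : \sum_i b i = \sum_(i < q.+1 | (i < k)%N) a i + s by exact: sum_split.
have hvec : \sum_i b i *: N i = v + s *: N k.
  rewrite /v -sum_split; apply: eq_bigr => i _; rewrite /b.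
  case: ifP => // _; case: ifP => [/eqP -> //|_]; by rewrite scale0r.
have hnorm : enorm (v + s *: N k) = wedge_norm v (N k).
  rewrite /enorm /wedge_norm; congr Num.sqrt.
  rewrite !dotpDl !dotpDr !dotpZl !dotpZr (@dotpC R n (N k) v) (@dotp1 R n (N k) (Nunit k)) /s.
  ring.
rewrite hsum hvec hnorm => H.
apply: le_trans (le_trans H _); first by rewrite lerDl.
by rewrite ler_wpM2r ?sqrtr_ge0 // ltW.
Qed.
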